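(* Let $U\subset\mathbb{C}$ be a simply connected domain. Let $\phi=(\phi_1,\phi_2,\phi_3):U\to\mathbb{C}^3$ be holomorphic with $\phi_2=\pm\mathrm{i}\phi_1$ (a fixed sign) and $\phi_1$ nowhere zero. Let $\mathbf{x}(z)=\mathrm{Re}\int_{z_0}^z\phi(w)\,\mathrm{d}w$, with $z=u+\mathrm{i}v$. Then $\mathbf{x}$ is an admissible simply isotropic minimal immersion, and: $$\mathrm{I}=|\phi_1|^2(\mathrm{d}u^2+\mathrm{d}v^2),$$ $$\mathrm{II}=\mathrm{Re}\Big[\phi_1\Big(\tfrac{\phi_3}{\phi_1}\Big)'\Big](\mathrm{d}u^2-\mathrm{d}v^2)-2\,\mathrm{Im}\Big[\phi_1\Big(\tfrac{\phi_3}{\phi_1}\Big)'\Big]\mathrm{d}u\,\mathrm{d}v,$$ $$K=-\Big|\frac{1}{\phi_1}\Big(\frac{\phi_3}{\phi_1}\Big)'\Big|^2.$$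
   Context: $\mathbb{I}^3$ is $\mathbb{R}^3$ with the degenerate metric $\langle a,b\rangle=a^1b^1+a^2b^2$. A surface is admissible if none of its tangent planes contains the vertical direction $(0,0,1)$. The first fundamental form has coefficients $g_{ij}=\langle\mathbf{x}_i,\mathbf{x}_j\rangle$, where $\mathbf{x}_1=\mathbf{x}_u$ and $\mathbf{x}_2=\mathbf{x}_v$. The minimal normal $\mathbf{N}_m$ is the unique vector of the form $(a,b,1)$ that is Euclidean-orthogonal to $\mathbf{x}_u$ and $\mathbf{x}_v$. The second fundamental form is $\mathrm{II}=h_{11}\mathrm{d}u^2+2h_{12}\mathrm{d}u\mathrm{d}v+h_{22}\mathrm{d}v^2$ with $h_{ij}=\mathbf{x}_{ij}\cdot\mathbf{N}_m$, where $\cdot$ is the Euclidean dot product. The isotropic Gaussian curvature is $K=(h_{11}h_{22}-h_{12}^2)/(g_{11}g_{22}-g_{12}^2)$. Minimal means the isotropic mean curvature $H=(g_{11}h_{22}-2g_{12}h_{12}+g_{22}h_{11})/(2\det g)$ vanishes. *)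

(* Defs.v *)
From Stdlib Require Import Reals.
From Coquelicot Require Import Coquelicot.
Open Scope R_scope.

Definition Cderiv (f : C -> C) (z l : C) : Prop :=
  @is_derive C_AbsRing C_NormedModule f z l.

Definition holomorphic_on (U : C -> Prop) (f : C -> C) : Prop :=
  forall z, U z -> exists l, Cderiv f z l.

Definition path_in (U : C -> Prop) (g : R -> C) : Prop :=
  (forall t, continuous g t) /\ (forall t, 0 <= t <= 1 -> U (g t)).

Definition domain (U : C -> Prop) : Prop :=
  open U /\ (exists z, U z) /\
  (forall a b, U a -> U b ->
     exists g, path_in U g /\ g 0 = a /\ g 1 = b).

Definition simply_connected_domain (U : C -> Prop) : Prop :=
  domain U /\
  forall g, path_in U g -> g 0 = g 1 ->
    exists H : R * R -> C,
      (forall p, continuous H p) /\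
      (forall s t, 0 <= s <= 1 -> 0 <= t <= 1 -> U (H (s, t))) /\
      (forall t, 0 <= t <= 1 -> H (0, t) = g t) /\
      (forall t, 0 <= t <= 1 -> H (1, t) = g 0) /\
      (forall s, 0 <= s <= 1 -> H (s, 0) = g 0 /\ H (s, 1) = g 0).

(* F z = ∫_{z0}^z phi(w) dw on U : the holomorphic primitive of phi on U
   vanishing at z0 (well defined and path independent since U is a
   simply connected domain). *)
Definition integral_from (U : C -> Prop) (z0 : C) (phi F : C -> C) : Prop :=
  F z0 = 0%C /\ forall z, U z -> Cderiv F z (phi z).

Definition V3 := (R * R * R)%type.
Definition c1 (a : V3) : R := fst (fst a).
Definition c2 (a : V3) : R := snd (fst a).
Definition c3 (a : V3) : R := snd a.

Definition edot (a b : V3) : R := c1 a * c1 b + c2 a * c2 b + c3 a * c3 b.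
Definition cross (a b : V3) : V3 :=
  (c2 a * c3 b - c3 a * c2 b, c3 a * c1 b - c1 a * c3 b,
   c1 a * c2 b - c2 a * c1 b).
Definition vscale (r : R) (a : V3) : V3 := (r * c1 a, r * c2 a, r * c3 a).
Definition vadd (a b : V3) : V3 := (c1 a + c1 b, c2 a + c2 b, c3 a + c3 b).

Definition idot (a b : V3) : R := c1 a * c1 b + c2 a * c2 b.

Definition surface := R * R -> V3.

Definition pdu (f : R * R -> R) (p : R * R) : R :=
  Derive (fun s => f (s, snd p)) (fst p).
Definition pdv (f : R * R -> R) (p : R * R) : R :=
  Derive (fun s => f (fst p, s)) (snd p).

Definition Du (x : surface) : surface := fun p =>
  (pdu (fun q => c1 (x q)) p, pdu (fun q => c2 (x q)) p, pdu (fun q => c3 (x q)) p).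
Definition Dv (x : surface) : surface := fun p =>
  (pdv (fun q => c1 (x q)) p, pdv (fun q => c2 (x q)) p, pdv (fun q => c3 (x q)) p).

Definition twice_diff_on (U : R * R -> Prop) (f : R * R -> R) : Prop :=
  forall p, U p ->
    ex_filterdiff f (locally p) /\
    ex_filterdiff (pdu f) (locally p) /\
    ex_filterdiff (pdv f) (locally p).

Definition immersion_on (U : R * R -> Prop) (x : surface) : Prop :=
  twice_diff_on U (fun q => c1 (x q)) /\
  twice_diff_on U (fun q => c2 (x q)) /\
  twice_diff_on U (fun q => c3 (x q)) /\
  (forall p, U p -> cross (Du x p) (Dv x p) <> (0, 0, 0)).

Definition admissible_on (U : R * R -> Prop) (x : surface) : Prop :=
  forall p, U p ->
    ~ exists a b : R, vadd (vscale a (Du x p)) (vscale b (Dv x p)) = (0, 0, 1).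

Definition g11 (x : surface) p := idot (Du x p) (Du x p).
Definition g12 (x : surface) p := idot (Du x p) (Dv x p).
Definition g22 (x : surface) p := idot (Dv x p) (Dv x p).

(* minimal normal: the unique (a,b,1) Euclidean-orthogonal to x_u and x_v,
   i.e. the cross product x_u × x_v normalized to third coordinate 1
   (third coordinate nonzero for an admissible surface) *)
Definition Nm (x : surface) p : V3 :=
  let c := cross (Du x p) (Dv x p) in vscale (/ c3 c) c.

Definition h11 (x : surface) p := edot (Du (Du x) p) (Nm x p).
Definition h12 (x : surface) p := edot (Dv (Du x) p) (Nm x p).
Definition h22 (x : surface) p := edot (Dv (Dv x) p) (Nm x p).

Definition detg (x : surface) p := g11 x p * g22 x p - g12 x p ^ 2.

Definition Kiso (x : surface) p :=
  (h11 x p * h22 x p - h12 x p ^ 2) / detg x p.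
Definition Hiso (x : surface) p :=
  (g11 x p * h22 x p - 2 * g12 x p * h12 x p + g22 x p * h11 x p)
  / (2 * detg x p).

(* Main.v *)
From Stdlib Require Import Reals Lra.
From Coquelicot Require Import Coquelicot.
Require Import Defs.
Open Scope R_scope.

Lemma sqrt2_lt2 : sqrt 2 < 2.
Proof.
  rewrite <- (sqrt_square 2) at 2 by lra.
  apply sqrt_lt_1_alt; lra.
Qed.
Lemma locA_P (z : C) (P : C -> Prop) :
  @locally (AbsRing_UniformSpace C_AbsRing) z P -> @locally C_UniformSpace z P.
Proof.
  intros [d Hd].
  assert (Hp : 0 < d / 2) by (destruct d; simpl; lra).
  exists (mkposreal _ Hp). intros w [H1 H2]. apply Hd.
  simpl in *. unfold AbsRing_ball. unfold ball in H1, H2; simpl in H1, H2.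
  unfold AbsRing_ball in H1, H2. simpl in *.
  change (Cmod (minus w z) < d).
  assert (Hm := Cmod_2Rmax (minus w z)).
  assert (H2' := sqrt2_lt2).
  destruct z as [a b], w as [c e]. cbn in Hm, H1, H2 |- *.
  assert (Rmax (Rabs (c + - a)) (Rabs (e + - b)) < d / 2) by (apply Rmax_lub_lt; assumption).
  assert (0 <= Rmax (Rabs (c + - a)) (Rabs (e + - b))) by (eapply Rle_trans; [apply Rabs_pos| apply Rmax_l]).
  nra.
Qed.

Lemma locP_A (z : C) (P : C -> Prop) :
  @locally C_UniformSpace z P -> @locally (AbsRing_UniformSpace C_AbsRing) z P.
Proof.
  intros [d Hd].
  exists d. intros w Hw. apply Hd.
  unfold ball in Hw; simpl in Hw. unfold AbsRing_ball in Hw.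
  change (Cmod (minus w z) < d) in Hw.
  assert (Hm := Rmax_Cmod (minus w z)).
  destruct z as [a b], w as [c e]. cbn in Hm, Hw.
  split; unfold ball; simpl; unfold AbsRing_ball; simpl; unfold abs, minus, plus, opp; simpl.
  - eapply Rle_lt_trans; [apply Rmax_l|]. eapply Rle_lt_trans; [exact Hm|exact Hw].
  - eapply Rle_lt_trans; [apply Rmax_r|]. eapply Rle_lt_trans; [exact Hm|exact Hw].
Qed.

Lemma Cderiv_RI (F : C -> C) (x y : R) (l : C) : Cderiv F (x,y) l ->
  differentiable_pt_lim (fun a b => Re (F (a,b))) x y (Re l) (- Im l) /\
  differentiable_pt_lim (fun a b => Im (F (a,b))) x y (Im l) (Re l).
Proof.
  intros [_ Hd]. specialize (Hd (x,y) (fun P H => H)).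
  assert (H2 := sqrt2_lt2).
  assert (Hs : 0 <= sqrt 2) by apply sqrt_pos.
  split; intros eps; apply locally_2d_locally;
  assert (He : 0 < eps / 2) by (destruct eps; simpl; lra);
  specialize (Hd (mkposreal _ He)); apply locA_P in Hd;
  (eapply filter_imp; [|exact Hd]); intros [u v] H; simpl in H |- *;
  assert (Hm := Cmod_2Rmax (minus ((u,v):C) (x,y)));
  assert (Hm0 : 0 <= Rmax (Rabs (u - x)) (Rabs (v - y)))
     by (eapply Rle_trans; [apply Rabs_pos| apply Rmax_l]);
  set (w := minus (minus (F (u,v)) (F(x,y))) (scal (minus ((u,v):C) (x,y)) l)) in H;
  assert (Hr := Rmax_Cmod w);
  change (norm w) with (Cmod w) in H;
  change (norm (minus ((u,v):C) (x,y))) with (Cmod (minus ((u,v):C) (x,y))) in H.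
  - assert (Ha : Rabs (Re (F (u, v)) - Re (F (x, y)) - (Re l * (u - x) + - Im l * (v - y))) <= Cmod w).
    { replace (Re (F (u, v)) - Re (F (x, y)) - (Re l * (u - x) + - Im l * (v - y))) with (fst w).
      + eapply Rle_trans; [apply Rmax_l|exact Hr].
      + unfold w. destruct (F (u,v)) as [a b]. destruct (F (x,y)) as [c d]. destruct l as [p q].
        cbn. ring. }
    assert (Hn : Cmod w <= eps/2 * Cmod (minus ((u,v):C) (x,y))) by exact H.
    assert (Hm' : Cmod (minus ((u,v):C) (x,y)) <= sqrt 2 * Rmax (Rabs (u-x)) (Rabs (v-y))) by exact Hm.
    clearbody w. clear H Hm Hr. destruct eps as [e ep]; simpl in *.
    set (M := Rmax (Rabs (u-x)) (Rabs (v-y))) in *.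
    assert (e/2*Cmod (minus ((u,v):C) (x,y)) <= e/2 * (sqrt 2 * M)) by (apply Rmult_le_compat_l; lra).
    assert (sqrt 2 * M <= 2*M) by nra.
    assert (e/2 * (sqrt 2 * M) <= e/2*(2*M)) by (apply Rmult_le_compat_l; lra).
    lra.
  - assert (Ha : Rabs (Im (F (u, v)) - Im (F (x, y)) - (Im l * (u - x) + Re l * (v - y))) <= Cmod w).
    { replace (Im (F (u, v)) - Im (F (x, y)) - (Im l * (u - x) + Re l * (v - y))) with (snd w).
      + eapply Rle_trans; [apply Rmax_r|exact Hr].
      + unfold w. destruct (F (u,v)) as [a b]. destruct (F (x,y)) as [c d]. destruct l as [p q].
        cbn. ring. }
    assert (Hn : Cmod w <= eps/2 * Cmod (minus ((u,v):C) (x,y))) by exact H.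
    assert (Hm' : Cmod (minus ((u,v):C) (x,y)) <= sqrt 2 * Rmax (Rabs (u-x)) (Rabs (v-y))) by exact Hm.
    clearbody w. clear H Hm Hr. destruct eps as [e ep]; simpl in *.
    set (M := Rmax (Rabs (u-x)) (Rabs (v-y))) in *.
    assert (e/2*Cmod (minus ((u,v):C) (x,y)) <= e/2 * (sqrt 2 * M)) by (apply Rmult_le_compat_l; lra).
    assert (sqrt 2 * M <= 2*M) by nra.
    assert (e/2 * (sqrt 2 * M) <= e/2*(2*M)) by (apply Rmult_le_compat_l; lra).
    lra.
Qed.

Lemma dpl_ex (f : R * R -> R) (x y lx ly : R) :
  differentiable_pt_lim (fun a b => f (a,b)) x y lx ly -> ex_filterdiff f (locally (x,y)).
Proof.
  intros H. apply filterdiff_differentiable_pt_lim in H.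
  eexists. eapply (filterdiff_ext_locally (fun u : R * R => f (fst u, snd u)) f); [|exact H].
  apply filter_forall. intros [a b]; reflexivity.
Qed.

Lemma dpl_opp (f : R -> R -> R) (x y lx ly : R) :
  differentiable_pt_lim f x y lx ly -> differentiable_pt_lim (fun a b => - f a b) x y (-lx) (-ly).
Proof.
  intros H eps. specialize (H eps). apply locally_2d_locally in H. apply locally_2d_locally.
  eapply filter_imp; [|exact H]. intros [u v] Hu. simpl in *.
  replace (- f u v - - f x y - (- lx * (u - x) + - ly * (v - y))) with
    (- (f u v - f x y - (lx * (u - x) + ly * (v - y)))) by ring.
  rewrite Rabs_Ropp. exact Hu.
Qed.

Lemma pd_Re (U : C -> Prop) (F phi : C -> C) : open U ->
  (forall q, U q -> Cderiv F q (phi q)) -> forall q, U q ->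
  pdu (fun r => Re (F r)) q = Re (phi q) /\ pdv (fun r => Re (F r)) q = - Im (phi q).
Proof.
  intros HO HF [a b] Hq.
  destruct (Cderiv_RI F a b (phi (a,b)) (HF _ Hq)) as [H _].
  apply differentiable_pt_lim_unique in H. exact H.
Qed.

Lemma pd2_dpl (U : C -> Prop) (F phi : C -> C) (x y : R) (l : C) : open U ->
  (forall q, U q -> Cderiv F q (phi q)) -> U (x,y) -> Cderiv phi (x,y) l ->
  differentiable_pt_lim (fun a b => pdu (fun r => Re (F r)) (a,b)) x y (Re l) (- Im l) /\
  differentiable_pt_lim (fun a b => pdv (fun r => Re (F r)) (a,b)) x y (- Im l) (- Re l).
Proof.
  intros HO HF Hp Hl.
  destruct (Cderiv_RI phi x y l Hl) as [HR HI].
  assert (Hloc : locally_2d (fun a b => U (a,b)) x y).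
  { apply locally_2d_locally. specialize (HO _ Hp).
    eapply filter_imp; [|exact HO]. intros [a b] H; exact H. }
  split.
  - eapply differentiable_pt_lim_ext; [|exact HR].
    eapply locally_2d_impl; [|exact Hloc]. apply locally_2d_forall. intros a b Hab.
    symmetry. exact (proj1 (pd_Re U F phi HO HF _ Hab)).
  - apply dpl_opp in HI.
    eapply differentiable_pt_lim_ext; [|exact HI].
    eapply locally_2d_impl; [|exact Hloc]. apply locally_2d_forall. intros a b Hab.
    symmetry. exact (proj2 (pd_Re U F phi HO HF _ Hab)).
Qed.

Lemma pd2_val (U : C -> Prop) (F phi : C -> C) (p : C) (l : C) : open U ->
  (forall q, U q -> Cderiv F q (phi q)) -> U p -> Cderiv phi p l ->
  pdu (pdu (fun r => Re (F r))) p = Re l /\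
  pdv (pdu (fun r => Re (F r))) p = - Im l /\
  pdv (pdv (fun r => Re (F r))) p = - Re l.
Proof.
  intros HO HF Hp Hl. destruct p as [x y].
  destruct (pd2_dpl U F phi x y l HO HF Hp Hl) as [H1 H2].
  apply differentiable_pt_lim_unique in H1. apply differentiable_pt_lim_unique in H2.
  split; [exact (proj1 H1)|split; [exact (proj2 H1)|exact (proj2 H2)]].
Qed.

Lemma twice_Re (U : C -> Prop) (F phi : C -> C) : open U ->
  (forall q, U q -> Cderiv F q (phi q)) -> holomorphic_on U phi ->
  twice_diff_on U (fun r => Re (F r)).
Proof.
  intros HO HF Hh [x y] Hp. destruct (Hh _ Hp) as [l Hl].
  destruct (pd2_dpl U F phi x y l HO HF Hp Hl) as [H1 H2].
  destruct (Cderiv_RI F x y (phi (x,y)) (HF _ Hp)) as [H0 _].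
  split; [|split].
  - exact (dpl_ex _ _ _ _ _ H0).
  - exact (dpl_ex _ _ _ _ _ H1).
  - exact (dpl_ex _ _ _ _ _ H2).
Qed.

Lemma Cinv_deriv (w : C) : w <> 0%C -> Cderiv Cinv w (- / (w * w))%C.
Proof.
  intros Hw. split; [apply is_linear_scal_l|].
  intros x Hx. apply (@is_filter_lim_locally_unique C_AbsRing (AbsRing_NormedModule C_AbsRing)) in Hx. subst x.
  intros eps.
  assert (Hm : 0 < Cmod w) by (apply Cmod_gt_0; exact Hw).
  set (m := Cmod w) in *.
  assert (Hd : 0 < Rmin (m/2) (eps * m^3 / 2)).
  { apply Rmin_pos; [lra|]. destruct eps as [e ep]; simpl. 
    assert (0 < m^3) by (apply pow_lt; lra). nra. }
  exists (mkposreal _ Hd). intros y Hy. change C in y.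
  change (abs (minus y w) < Rmin (m/2) (eps * m^3 / 2)) in Hy.
  change (Cmod (minus y w) < Rmin (m/2) (eps * m^3 / 2)) in Hy.
  set (r := Cmod (minus y w)) in *.
  assert (Hr1 : r < m/2) by (eapply Rlt_le_trans; [exact Hy|apply Rmin_l]).
  assert (Hr2 : r < eps * m^3/2) by (eapply Rlt_le_trans; [exact Hy|apply Rmin_r]).
  assert (Hr0 : 0 <= r) by apply Cmod_ge_0.
  assert (Hcy : m/2 <= Cmod y).
  { assert (Htri := Cmod_triangle y (w - y)%C).
    replace (y + (w - y))%C with w in Htri by ring.
    assert (Cmod (w - y)%C = r).
    { unfold r. rewrite <- Cmod_opp. f_equal. change (minus y w) with (y - w)%C. ring. }
    fold m in Htri. lra. }
  assert (Hy0 : (y:C) <> 0%C). { apply Cmod_gt_0. lra. }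
  change (Cmod (minus (minus (Cinv y) (Cinv w)) (scal (minus y w) (Copp (Cinv (w * w))))) <= eps * r).
  replace (minus (minus (Cinv y) (Cinv w)) (scal (minus y w) (Copp (Cinv (w * w)))))
    with ((minus y w) * (minus y w) / (y * (w * w)))%C.
  2:{ change (minus y w) with (y - w)%C.
      change (minus (minus (Cinv y) (Cinv w)) (scal (y - w)%C (Copp (Cinv (w * w)))))
        with ((Cinv y - Cinv w) - ((y - w) * (Copp (Cinv (w * w)))))%C.
      field. auto. }
  rewrite Cmod_div by (apply Cmult_neq_0; auto; apply Cmult_neq_0; auto).
  rewrite !Cmod_mult. fold r m.
  assert (Hden : 0 < Cmod y * (m * m)) by (apply Rmult_lt_0_compat; nra).
  apply (Rmult_le_reg_r (Cmod y * (m * m))); [exact Hden|].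
  unfold Rdiv. rewrite Rmult_assoc, Rinv_l by lra. rewrite Rmult_1_r.
  destruct eps as [e ep]; simpl in *.
  assert (r * r <= r * (e * m^3/2)) by nra.
  assert (e * m^3 / 2 * r <= e * r * (Cmod y * (m * m))).
  { replace (e * m^3/2*r) with (e * r * (m/2 * (m*m))) by (unfold Rdiv; simpl; ring_simplify; reflexivity).
    apply Rmult_le_compat_l; [nra|]. apply Rmult_le_compat_r; nra. }
  nra.
Qed.

Lemma convA f p l : Cderiv f p l -> @is_derive C_AbsRing (AbsRing_NormedModule C_AbsRing) f p l.
Proof. intros [H1 H2]. split; [apply is_linear_scal_l|exact H2]. Qed.
Lemma convC f p l : @is_derive C_AbsRing (AbsRing_NormedModule C_AbsRing) f p l -> Cderiv f p l.
Proof. intros [H1 H2]. split; [apply is_linear_scal_l|exact H2]. Qed.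

Lemma quot_deriv (f g : C -> C) (p lf lg : C) : Cderiv f p lf -> Cderiv g p lg -> g p <> 0%C ->
  Cderiv (fun z => (f z / g z)%C) p (lf * / g p + f p * (lg * (- / (g p * g p))))%C.
Proof.
  intros Hf Hg Hgp.
  assert (Hi : Cderiv (fun z => Cinv (g z)) p (scal lg (- / (g p * g p)))%C).
  { unfold Cderiv. apply (@is_derive_comp C_AbsRing C_NormedModule Cinv g).
    - apply Cinv_deriv; exact Hgp.
    - apply convA; exact Hg. }
  assert (Hm := @is_derive_mult C_AbsRing f (fun z => Cinv (g z)) p lf _ (convA _ _ _ Hf) (convA _ _ _ Hi)
     (fun n m => Cmult_comm n m)).
  apply convC. exact Hm.
Qed.

Lemma scal_deriv (U : C -> Prop) (f g : C -> C) (p l k : C) : open U -> U p ->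
  (forall z, U z -> g z = (k * f z)%C) -> Cderiv f p l -> Cderiv g p (l * k)%C.
Proof.
  intros HO Hp Hg Hf.
  assert (H := @is_derive_scal_l C_AbsRing C_NormedModule f p l k (convA _ _ _ Hf)).
  unfold Cderiv. eapply is_derive_ext_loc; [|exact H].
  apply locP_A. eapply filter_imp; [|exact (HO p Hp)].
  intros z Hz. rewrite Hg by exact Hz. change ((f z * k)%C = (k * f z)%C). apply Cmult_comm.
Qed.

Theorem mainTheorem5 (U : C -> Prop) (z0 : C)
  (phi1 phi2 phi3 F1 F2 F3 : C -> C) :
  simply_connected_domain U -> U z0 ->
  holomorphic_on U phi1 -> holomorphic_on U phi2 -> holomorphic_on U phi3 ->
  ((forall z, U z -> phi2 z = (Ci * phi1 z)%C) \/
   (forall z, U z -> phi2 z = (- (Ci * phi1 z))%C)) ->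
  (forall z, U z -> phi1 z <> 0%C) ->
  integral_from U z0 phi1 F1 ->
  integral_from U z0 phi2 F2 ->
  integral_from U z0 phi3 F3 ->
  let x : surface := fun p => (Re (F1 p), Re (F2 p), Re (F3 p)) in
  immersion_on U x /\ admissible_on U x /\
  (forall p, U p -> Hiso x p = 0) /\
  (forall p, U p ->
     g11 x p = Cmod (phi1 p) ^ 2 /\ g12 x p = 0 /\ g22 x p = Cmod (phi1 p) ^ 2) /\
  (forall p, U p ->
     exists d : C,
       Cderiv (fun z => (phi3 z / phi1 z)%C) p d /\
       h11 x p = Re (phi1 p * d) /\
       h12 x p = - Im (phi1 p * d) /\
       h22 x p = - Re (phi1 p * d) /\
       Kiso x p = - (Cmod (d / phi1 p)%C) ^ 2).
Proof.
  intros HU Hz0 H1 H2 H3 Hsign Hnz [_ HF1] [_ HF2] [_ HF3] x.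
  destruct HU as [[HO _] _].
  assert (Hk : exists k, (k = Ci \/ k = (- Ci)%C) /\ forall z, U z -> phi2 z = (k * phi1 z)%C).
  { destruct Hsign as [Hs|Hs].
    - exists Ci. split; [left; reflexivity|exact Hs].
    - exists (- Ci)%C. split; [right; reflexivity|]. intros z Hz. rewrite Hs by exact Hz. ring. }
  destruct Hk as [k [Hkv Hk]].
  assert (Vals : forall p, U p -> exists l1 l3, Cderiv phi1 p l1 /\ Cderiv phi3 p l3 /\
   Du x p = (Re (phi1 p), Re (k * phi1 p)%C, Re (phi3 p)) /\
   Dv x p = (- Im (phi1 p), - Im (k * phi1 p)%C, - Im (phi3 p)) /\
   Du (Du x) p = (Re l1, Re (l1 * k)%C, Re l3) /\
   Dv (Du x) p = (- Im l1, - Im (l1 * k)%C, - Im l3) /\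
   Dv (Dv x) p = (- Re l1, - Re (l1 * k)%C, - Re l3)).
  { intros p Hp.
    destruct (H1 p Hp) as [l1 Hl1]. destruct (H3 p Hp) as [l3 Hl3].
    assert (Hl2 := scal_deriv U phi1 phi2 p l1 k HO Hp Hk Hl1).
    exists l1, l3. split; [exact Hl1|split; [exact Hl3|]].
    destruct (pd_Re U F1 phi1 HO HF1 p Hp) as [a1 b1].
    destruct (pd_Re U F2 phi2 HO HF2 p Hp) as [a2 b2].
    destruct (pd_Re U F3 phi3 HO HF3 p Hp) as [a3 b3].
    destruct (pd2_val U F1 phi1 p l1 HO HF1 Hp Hl1) as [c1' [d1 e1]].
    destruct (pd2_val U F2 phi2 p _ HO HF2 Hp Hl2) as [c2' [d2 e2]].
    destruct (pd2_val U F3 phi3 p l3 HO HF3 Hp Hl3) as [c3' [d3 e3]].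
    rewrite <- (Hk p Hp).
    split; [|split; [|split; [|split]]];
      (unfold Du, Dv; f_equal; [f_equal|]; assumption). }
  assert (Hpos : forall p, U p -> 0 < Re (phi1 p) ^ 2 + Im (phi1 p) ^ 2).
  { intros p Hp. rewrite <- Cmod2_alt. apply pow_lt. apply Cmod_gt_0. auto. }
  split; [|split; [|split; [|split]]].
  - split; [|split; [|split]].
    + exact (twice_Re U F1 phi1 HO HF1 H1).
    + exact (twice_Re U F2 phi2 HO HF2 H2).
    + exact (twice_Re U F3 phi3 HO HF3 H3).
    + intros p Hp. destruct (Vals p Hp) as (l1 & l3 & _ & _ & E1 & E2 & _).
      rewrite E1, E2. specialize (Hpos p Hp). intros Hc.
      apply (f_equal c3) in Hc. revert Hc Hpos.
      destruct Hkv; subst k; destruct (phi1 p) as [a b]; unfold c3, cross, c1, c2; cbn; intros; nra.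
  - intros p Hp [al [be Hc]]. destruct (Vals p Hp) as (l1 & l3 & _ & _ & E1 & E2 & _).
    rewrite E1, E2 in Hc. specialize (Hpos p Hp). revert Hc Hpos.
    destruct Hkv; subst k; destruct (phi1 p) as [a b]; unfold vadd, vscale, c3, c1, c2; cbn;
      intros Hc Hpos; injection Hc as Hx Hy Hz;
      (assert (H0 : (al^2+be^2)*(a^2+b^2) = 0) by nra;
       assert (H5 : al^2+be^2 = 0) by (apply Rmult_integral in H0; destruct H0; nra);
       assert (al = 0) by nra; assert (be = 0) by nra; subst; lra).
  - intros p Hp. destruct (Vals p Hp) as (l1 & l3 & _ & _ & E1 & E2 & E3 & E4 & E5).
    unfold Hiso, detg, g11, g12, g22, h11, h12, h22, Nm.
    rewrite E1, E2, E3, E4, E5. specialize (Hpos p Hp). revert Hpos.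
    destruct Hkv; subst k; destruct (phi1 p) as [a b]; destruct (phi3 p) as [c e];
      destruct l1 as [A B]; destruct l3 as [P Q];
      unfold idot, edot, vscale, cross, c3, c1, c2; cbn; intros Hpos;
      try (field; repeat split; intro; nra).
  - intros p Hp. destruct (Vals p Hp) as (l1 & l3 & _ & _ & E1 & E2 & _).
    unfold g11, g12, g22. rewrite E1, E2, Cmod2_alt.
    destruct Hkv; subst k; destruct (phi1 p) as [a b]; unfold idot, c1, c2, c3; cbn;
      (split; [ring|split; ring]).
  - intros p Hp. destruct (Vals p Hp) as (l1 & l3 & Hl1 & Hl3 & E1 & E2 & E3 & E4 & E5).
    exists (l3 * / phi1 p + phi3 p * (l1 * (- / (phi1 p * phi1 p))))%C.
    split; [apply quot_deriv; auto|].
    unfold Kiso, detg, g11, g12, g22, h11, h12, h22, Nm.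
    rewrite E1, E2, E3, E4, E5, Cmod2_alt. specialize (Hpos p Hp). revert Hpos.
    clear Hl1 Hl3 E1 E2 E3 E4 E5.
    destruct Hkv; subst k; destruct (phi1 p) as [a b]; destruct (phi3 p) as [c e];
      destruct l1 as [A B]; destruct l3 as [P Q];
      unfold idot, edot, vscale, cross, c3, c1, c2; cbn; intros Hpos;
      (split; [|split; [|split]]); field; repeat split; intro; nra.
Qed.
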